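(* Let $I$ be a parallel offering instance with $k$ identical positions ($p_{ij}=p_i$, $v_{ij}=v_i$) and $T$ rounds, and let $I'$ be the sequential offering instance with the same candidates, the same $k$, and a budget of $kT$ offers. Then the policy $\mathsf{ALG}_{\mathtt{par}}$ satisfies $R_{\mathsf{ALG}_{\mathtt{par}}}(I)\ge(1-1/e)\,\mathsf{OPT}_{\mathtt{seq}}(I')$.
   Context: Parallel offering: in each of $T$ rounds the firm may send at most one offer per unfilled position, each candidate receives at most one offer overall, candidate $i$ accepts an offer with probability $p_i$ (independently across candidates) and then fills that position, earning $v_i$. Sequential offering: offers are sent one at a time, at most $kT$ offers, each candidate at most one offer, accepting candidates are hired and at most $k$ can be hired; $\mathsf{OPT}_{\mathtt{seq}}(I')$ is the supremum of expected total value over all adaptive sequential policies. $\mathsf{ALG}_{\mathtt{par}}$: solve $\mathrm{LP}_{\mathtt{par}}(I)$ (maximize $\sum_{j,i}v_{ij}p_{ij}y_{ij}$ s.t. $\sum_iy_{ij}\le T$, $\sum_ip_{ij}y_{ij}\le1$ for each $j$, $\sum_jy_{ij}\le1$ for each $i$, $0\le y\le1$), round the optimal $y$ with the Gandhi–Khuller–Parthasarathy–Srinivasan dependent rounding on the candidate–position bipartite graph (outputs $Y\in\{0,1\}^{n\times k}$ with $\mathbb{E}Y_{ij}=y_{ij}$, vertex degrees rounded to floor or ceiling of fractional degrees, and negative correlation of edges at each vertex), put $i$ in list $L_j$ iff $Y_{ij}=1$, and for each position offer the candidates of its list in decreasing order of value, in parallel, until the position is filled. *)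

(* Defs.v *)
From HB Require Import structures.
From mathcomp Require Import all_boot all_order all_algebra.
From mathcomp Require Import fingroup perm.
From mathcomp Require Import reals sequences exp.
Set Implicit Arguments. Unset Strict Implicit. Unset Printing Implicit Defensive.
Import Order.TTheory GRing.Theory Num.Theory.
Local Open Scope ring_scope.

Section Offering.
Variables (R : realType) (n k T : nat).
Variables (p v : 'I_n -> R).

(* Acceptance outcomes: omega i = true iff candidate i would accept an offer.
   Independent Bernoulli(p_i) across candidates. *)
Definition outcome := {ffun 'I_n -> bool}.
Definition probw (w : outcome) : R :=
  \prod_(i < n) (if w i then p i else 1 - p i).

Definition history := seq ('I_n * bool).
(* A deterministic adaptive policy: from the history, either offer to a
   candidate or stop. *)
Definition seq_policy := history -> option 'I_n.

Definition hires (h : history) : nat := count snd h.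

(* An offer is admissible if the candidate has not been offered before and
   fewer than k candidates have been hired; an inadmissible choice ends the
   process (equivalent to stopping). *)
Fixpoint seq_run (pol : seq_policy) (w : outcome) (fuel : nat) (h : history)
  : history :=
  match fuel with
  | 0 => h
  | f.+1 =>
    match pol h with
    | Some i =>
        if (i \notin map fst h) && (hires h < k)%N
        then seq_run pol w f (rcons h (i, w i))
        else h
    | None => h
    end
  end.

Definition hist_value (h : history) : R :=
  \sum_(x <- h | x.2) v x.1.

Definition seq_value (pol : seq_policy) : R :=
  \sum_(w : outcome) probw w * hist_value (seq_run pol w (k * T) [::]).

Definition lp_feasible (y : 'I_n -> 'I_k -> R) : Prop :=
  [/\ (forall i j, 0 <= y i j <= 1),
      (forall j, \sum_(i < n) y i j <= T%:R),
      (forall j, \sum_(i < n) p i * y i j <= 1)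
    & (forall i, \sum_(j < k) y i j <= 1)].

Definition lp_obj (y : 'I_n -> 'I_k -> R) : R :=
  \sum_(j < k) \sum_(i < n) v i * p i * y i j.

Definition lp_optimal (y : 'I_n -> 'I_k -> R) : Prop :=
  lp_feasible y /\ (forall y', lp_feasible y' -> lp_obj y' <= lp_obj y).

(* ---------- GKPS dependent rounding (by its guaranteed properties) ---------- *)
Definition rounding := {ffun 'I_n * 'I_k -> bool}.

Definition degC (Y : rounding) (i : 'I_n) : nat := \sum_(j < k) Y (i, j).
Definition degP (Y : rounding) (j : 'I_k) : nat := \sum_(i < n) Y (i, j).

Definition is_GKPS_rounding (y : 'I_n -> 'I_k -> R) (mu : rounding -> R)
  : Prop :=
  [/\ (forall Y, 0 <= mu Y),
      \sum_(Y : rounding) mu Y = 1,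
      (forall i j, \sum_(Y : rounding) mu Y * (Y (i, j))%:R = y i j),
      (forall Y, 0 < mu Y ->
         (forall i, let d := \sum_(j < k) y i j in
            ((degC Y i)%:Z == Num.floor d) || ((degC Y i)%:Z == Num.ceil d)) /\
         (forall j, let d := \sum_(i < n) y i j in
            ((degP Y j)%:Z == Num.floor d) || ((degP Y j)%:Z == Num.ceil d)))
    &
      (forall (i : 'I_n) (S : {set 'I_k}) (b : bool),
         \sum_(Y : rounding | [forall j in S, Y (i, j) == b]) mu Y
           <= \prod_(j in S) (if b then y i j else 1 - y i j)) /\
      (forall (j : 'I_k) (S : {set 'I_n}) (b : bool),
         \sum_(Y : rounding | [forall i in S, Y (i, j) == b]) mu Y
           <= \prod_(i in S) (if b then y i j else 1 - y i j))].

(* ord : a priority order on candidates (rank pi i; smaller = earlier),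
   used to list L_j in decreasing order of value (ties broken by pi). *)
Definition list_of (pi : {perm 'I_n}) (Y : rounding) (j : 'I_k) : seq 'I_n :=
  [seq i <- sort (fun a b => (pi a <= pi b)%N) (enum 'I_n) | Y (i, j)].

(* Position j offers to L_j[0], L_j[1], ... in rounds 0,1,...,T-1 until
   someone accepts; it earns the value of the first acceptor (if any). *)
Definition position_value (pi : {perm 'I_n}) (Y : rounding) (w : outcome)
  (j : 'I_k) : R :=
  match [seq i <- take T (list_of pi Y j) | w i] with
  | i :: _ => v i
  | [::] => 0
  end.

Definition par_reward (pi : {perm 'I_n}) (Y : rounding) (w : outcome) : R :=
  \sum_(j < k) position_value pi Y w j.

Definition ALG_par_value (mu : rounding -> R) (tb : rounding -> {perm 'I_n})
  : R :=
  \sum_(Y : rounding) mu Y * \sum_(w : outcome) probw w * par_reward (tb Y) Y w.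

Definition decreasing_value_order (pi : {perm 'I_n}) : Prop :=
  forall a b : 'I_n, v b < v a -> (pi a < pi b)%N.

End Offering.

(* Main.v *)
Require Import Defs.
From HB Require Import structures.
From mathcomp Require Import all_boot all_order all_algebra.
From mathcomp Require Import fingroup perm.
From mathcomp Require Import reals sequences exp convex interval_inference.
From mathcomp Require Import lra ring.
Import Order.TTheory GRing.Theory Num.Theory.
Set Implicit Arguments. Unset Strict Implicit. Unset Printing Implicit Defensive.
Local Open Scope ring_scope.

Lemma expN_le (R : realType) (s : R) (h0 : 0 <= s) (h1 : s <= 1) :
  expR (- s) <= 1 - (1 - expR (-1)) * s.
Proof.
have := convex_expR (Itv01 h0 h1) (-1) 0.
rewrite !convRE /= expR0 !mulr0 !addr0 mulr1 mulrN1.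
move=> H; apply: (le_trans H).
have -> : unstable.onem s = 1 - s by [].
lra.
Qed.

Section Probw.
Variables (R : realType) (n : nat) (p : 'I_n -> R).
Hypothesis hp : forall i, 0 <= p i <= 1.

Lemma prod_sum_ffun (F : 'I_n -> bool -> R) :
  \sum_(w : outcome n) \prod_i F i (w i) = \prod_i (F i true + F i false).
Proof.
rewrite -bigA_distr_bigA; apply: eq_bigr => i _; by rewrite big_bool.
Qed.

Lemma probw_ge0 w : 0 <= probw p w.
Proof.
apply: prodr_ge0 => i _; case: (w i); have /andP[h0 h1] := hp i; lra.
Qed.

Lemma sum_probw : \sum_(w : outcome n) probw p w = 1.
Proof.
rewrite /probw (prod_sum_ffun (fun i b => if b then p i else 1 - p i)).
by apply: big1 => i _; rewrite addrC subrK.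
Qed.
End Probw.
Section Par.
Variables (R : realType) (n k : nat) (p : 'I_n -> R).
Hypothesis hp : forall i, 0 <= p i <= 1.
Variables (y : 'I_n -> 'I_k -> R) (mu : rounding n k -> R).
Hypothesis hmu : is_GKPS_rounding y mu.
Hypothesis hy01 : forall i j, 0 <= y i j <= 1.
Variable j : 'I_k.

Definition Ex (f : rounding n k -> outcome n -> R) :=
  \sum_(Y : rounding n k) \sum_(w : outcome n) (mu Y * probw p w) * f Y w.

Lemma mu_ge0 Y : 0 <= mu Y.
Proof. by case: hmu. Qed.

Lemma Ex_le f g : (forall Y w, 0 < mu Y -> f Y w <= g Y w) -> Ex f <= Ex g.
Proof.
move=> H; apply: ler_sum => Y _; apply: ler_sum => w _.
have [->|nz] := eqVneq (mu Y) 0; first by rewrite !mul0r.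
have mP : 0 < mu Y by rewrite lt_def nz mu_ge0.
apply: ler_wpM2l; first by rewrite mulr_ge0 ?mu_ge0 ?probw_ge0.
exact: H.
Qed.

Lemma Ex_lin f g c : Ex (fun Y w => f Y w - c * g Y w) = Ex f - c * Ex g.
Proof.
rewrite /Ex mulr_sumr -sumrB; apply: eq_bigr => Y _.
rewrite mulr_sumr -sumrB; apply: eq_bigr => w _; ring.
Qed.

Lemma Ex1 : Ex (fun _ _ => 1) = 1.
Proof.
rewrite /Ex; under eq_bigr => Y _ do under eq_bigr => w _ do rewrite mulr1.
under eq_bigr => Y _ do rewrite -mulr_sumr sum_probw // mulr1.
by case: hmu.
Qed.

Definition a i := p i * y i j.

Lemma a01 i : 0 <= a i <= 1.
Proof.
have /andP[h0 h1] := hp i; have /andP[g0 g1] := hy01 i j; rewrite /a.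
apply/andP; split; first exact: mulr_ge0.
by rewrite -[1]mulr1 ler_pM.
Qed.

Lemma miss_le (U : {set 'I_n}) :
  Ex (fun Y w => ([forall i in U, ~~ (Y (i, j) && w i)] : bool)%:R)
  <= \prod_(i in U) (1 - a i).
Proof.
rewrite /Ex exchange_big /=.
have step : forall w : outcome n,
  \sum_(Y : rounding n k) mu Y * probw p w *
     ([forall i in U, ~~ (Y (i, j) && w i)] : bool)%:R
  <= probw p w * \prod_(i in U :&: [set i | w i]) (1 - y i j).
  move=> w.
  have -> : \sum_(Y : rounding n k) mu Y * probw p w *
     ([forall i in U, ~~ (Y (i, j) && w i)] : bool)%:R =
     probw p w * \sum_(Y : rounding n k |
        [forall i in U :&: [set i | w i], Y (i, j) == false]) mu Y.
    rewrite [in RHS]big_mkcond /= mulr_sumr; apply: eq_bigr => Y _.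
    have -> : [forall i in U, ~~ (Y (i, j) && w i)] =
              [forall i in U :&: [set i | w i], Y (i, j) == false].
      apply/forallP/forallP => H i; have := H i;
        rewrite !inE; case: (i \in U); case: (w i); case: (Y (i, j)) => //.
    by case: ifP => _; rewrite ?mulr1 ?mulr0 // mulrC.
  apply: ler_wpM2l; first exact: probw_ge0.
  by case: hmu => _ _ _ _ [_ H]; apply: H.
apply: (le_trans (ler_sum _ (fun w _ => step w))).
pose G i (b : bool) := (if b then p i else 1 - p i) *
   (if b && (i \in U) then 1 - y i j else 1).
have -> : \sum_(w : outcome n) probw p w *
     \prod_(i in U :&: [set i | w i]) (1 - y i j) =
   \sum_(w : outcome n) \prod_i G i (w i).
  apply: eq_bigr => w _; rewrite /probw /G big_split /=; congr (_ * _).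
  rewrite big_mkcond /=; apply: eq_bigr => i _; rewrite !inE.
  by case: (i \in U); case: (w i).
rewrite prod_sum_ffun [X in _ <= X]big_mkcond /=.
rewrite le_eqVlt; apply/orP; left; apply/eqP.
apply: eq_bigr => i _; rewrite /G /a /=.
by case: (i \in U) => /=; ring.
Qed.

Hypothesis hA : \sum_i a i <= 1.

Lemma sum_sub (U : {set 'I_n}) : \sum_(i in U) a i <= 1.
Proof.
apply: le_trans hA; rewrite [leRHS](bigID (fun i => i \in U)) /=.
rewrite -[leLHS]addr0 lerD2l; apply: sumr_ge0 => i _.
by case/andP: (a01 i).
Qed.

Lemma Ex0 : Ex (fun _ _ => 0) = 0.
Proof. by rewrite /Ex; apply: big1 => Y _; apply: big1 => w _; rewrite mulr0. Qed.

Lemma hit (U : {set 'I_n}) :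
  (1 - expR (-1)) * \sum_(i in U) a i
  <= Ex (fun Y w => ([exists i in U, Y (i, j) && w i] : bool)%:R).
Proof.
have -> : Ex (fun Y w => ([exists i in U, Y (i, j) && w i] : bool)%:R) =
  Ex (fun Y w => 1 - 1 * ([forall i in U, ~~ (Y (i, j) && w i)] : bool)%:R).
  apply: eq_bigr => Y _; apply: eq_bigr => w _; congr (_ * _).
  have -> : [exists i in U, Y (i, j) && w i] =
     ~~ [forall i in U, ~~ (Y (i, j) && w i)].
    rewrite negb_forall; apply: eq_existsb => i.
    by rewrite negb_imply negbK.
  by case: [forall i in U, _] => /=; rewrite mul1r ?subrr ?subr0.
rewrite Ex_lin Ex1 mul1r.
set s := \sum_(i in U) a i.
have s0 : 0 <= s by apply: sumr_ge0 => i _; case/andP: (a01 i).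
have s1 : s <= 1 := sum_sub U.
have H1 := miss_le U.
have H2 : \prod_(i in U) (1 - a i) <= expR (- s).
  rewrite /s -sumrN expR_sum; apply: ler_prod => i _.
  case/andP: (a01 i) => a0 a1; apply/andP; split; first by rewrite subr_ge0.
  by have := expR_ge1Dx (- a i).
have H3 := @expN_le R s s0 s1.
lra.
Qed.

Lemma key (m : nat) : forall (V : {set 'I_n}), #|V| = m ->
  forall (vv : 'I_n -> R) (F : rounding n k -> outcome n -> R),
  (forall i, i \in V -> 0 <= vv i) ->
  (forall (Y : rounding n k) (w : outcome n), 0 < mu Y -> 0 <= F Y w) ->
  (forall (Y : rounding n k) (w : outcome n) i, 0 < mu Y -> i \in V -> Y (i, j) && w i -> vv i <= F Y w) ->
  (1 - expR (-1)) * \sum_(i in V) a i * vv i <= Ex F.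
Proof.
have c0 : 0 <= 1 - expR (-1) :> R.
  by rewrite subr_ge0 expR_le1 lerN10.
elim: m => [|m IH] V cV vv F hvv hF0 hF.
  have -> : V = set0 by apply/eqP; rewrite -cards_eq0 cV.
  rewrite big_set0 mulr0 -Ex0; apply: Ex_le => Y w mP; exact: hF0.
have [x0 x0V] : exists x, x \in V by apply/card_gt0P; rewrite cV.
case: (@arg_minP _ _ _ x0 (mem V) vv x0V) => mm mV0 mmin.
have mV : mm \in V := mV0.
have cV' : #|V :\ mm| = m by move: cV; rewrite (cardsD1 mm) mV add1n => -[].
pose ind Y w := ([exists i in V, Y (i, j) && w i] : bool)%:R : R.
have hvm : 0 <= vv mm by apply: hvv.
have G1 : forall i, i \in V :\ mm -> 0 <= vv i - vv mm.
  by move=> i; rewrite !inE => /andP[_ iV]; rewrite subr_ge0; apply: mmin.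
have G2 : forall (Y : rounding n k) (w : outcome n), 0 < mu Y ->
    0 <= F Y w - vv mm * ind Y w.
  move=> Y w mP; rewrite /ind; case: (boolP [exists i in V, _]) => /=.
    case/existsP => i /andP[iV Hi]; rewrite mulr1 subr_ge0.
    apply: le_trans (hF Y w i mP iV Hi); exact: mmin.
  by move=> _; rewrite mulr0 subr0; apply: hF0.
have G3 : forall (Y : rounding n k) (w : outcome n) i, 0 < mu Y -> i \in V :\ mm ->
    Y (i, j) && w i -> vv i - vv mm <= F Y w - vv mm * ind Y w.
  move=> Y w i mP; rewrite !inE => /andP[_ iV] Hi.
  have -> : ind Y w = 1 by rewrite /ind; case: existsP => // -[]; exists i; rewrite iV.
  rewrite mulr1; apply: lerB => //; exact: hF.
have := IH (V :\ mm) cV' (fun i => vv i - vv mm)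
  (fun Y w => F Y w - vv mm * ind Y w) G1 G2 G3.
rewrite Ex_lin => IHi.
have Hh := hit V.
have Hh' : vv mm * ((1 - expR (-1)) * \sum_(i in V) a i) <= vv mm * Ex ind.
  exact: ler_wpM2l.
move: IHi Hh'.
have E1 : forall f : 'I_n -> R, \sum_(i in V) f i = f mm + \sum_(i in V :\ mm) f i.
  move=> f; rewrite (bigD1 mm) //=; congr (_ + _); apply: eq_bigl => i.
  by rewrite !inE andbC.
rewrite (E1 (fun i => a i * vv i)) (E1 a).
under eq_bigr => i _ do rewrite mulrBr.
rewrite sumrB -mulr_suml.
move: (Ex F) (Ex ind) (\sum_(i in V :\ mm) a i * vv i) (\sum_(i in V :\ mm) a i) => EF EI A B.
move=> H1 H2; nra.
Qed.
End Par.

Section PosVal.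
Variables (R : realType) (n k T : nat) (v : 'I_n -> R).
Hypothesis hv : forall i, 0 <= v i.

Lemma size_list_of (pi : {perm 'I_n}) (Y : rounding n k) j :
  size (list_of pi Y j) = degP Y j.
Proof.
rewrite /list_of size_filter count_sort /degP -sumn_count sumnE big_map.
by rewrite big_enum.
Qed.

Lemma posval_props (pi : {perm 'I_n}) (Y : rounding n k) (w : outcome n) j :
  decreasing_value_order v pi ->
  (degP Y j <= T)%N ->
  0 <= position_value T v pi Y w j /\
  (forall i, Y (i, j) && w i -> v i <= position_value T v pi Y w j).
Proof.
move=> hpi hdeg.
rewrite /position_value take_oversize ?size_list_of // /list_of -filter_predI.
set le := (fun a b : 'I_n => (pi a <= pi b)%N).
have srt : sorted le (sort le (enum 'I_n)).
  by apply: sort_sorted => a b; apply: leq_total.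
have tr : transitive le by move=> a b c; apply: leq_trans.
have srt2 := sorted_filter tr (predI w (fun i => Y (i, j))) srt.
have mem2 : forall i, (i \in [seq x <- sort le (enum 'I_n) | predI w (fun i => Y (i, j)) x])
   = (w i && Y (i, j)).
  by move=> i; rewrite mem_filter mem_sort mem_enum andbT.
move: srt2 mem2.
case: [seq x <- sort le (enum 'I_n) | predI w (fun i => Y (i, j)) x] => [|h t] srt2 mem2.
  split => // i Hi; have := mem2 i; rewrite in_nil andbC Hi //.
split=> // i Hi.
have : i \in h :: t by rewrite mem2 andbC.
rewrite in_cons => /orP[/eqP -> //|iT].
have /allP := order_path_min tr srt2.
move=> /(_ i iT); rewrite /le => hle.
rewrite leNgt; apply/negP => /hpi; rewrite ltnNge hle.
by [].
Qed.
End PosVal.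

Lemma deg_le (R : realType) (n k T : nat) (y : 'I_n -> 'I_k -> R) (Y : rounding n k) j :
  \sum_(i < n) y i j <= T%:R ->
  ((degP Y j)%:Z == Num.floor (\sum_(i < n) y i j)) ||
  ((degP Y j)%:Z == Num.ceil (\sum_(i < n) y i j)) ->
  (degP Y j <= T)%N.
Proof.
move=> hT /orP H.
have hc : Num.ceil (\sum_(i < n) y i j) <= T%:Z.
  by rewrite ceil_le_int.
rewrite -lez_nat; apply: le_trans hc.
case: H => /eqP ->; last by [].
by rewrite ceil_floor lerDl.
Qed.

Lemma part2 (R : realType) (n k T : nat) (p v : 'I_n -> R)
  (hp : forall i, 0 <= p i <= 1) (hv : forall i, 0 <= v i)
  (y : 'I_n -> 'I_k -> R) (hyf : lp_feasible T p y)
  (mu : rounding n k -> R) (hmu : is_GKPS_rounding y mu)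
  (tb : rounding n k -> {perm 'I_n})
  (htb : forall Y, decreasing_value_order v (tb Y)) :
  (1 - expR (-1)) * lp_obj p v y <= ALG_par_value T p v mu tb.
Proof.
case: hyf => h01 hT h1 hC.
have -> : ALG_par_value T p v mu tb =
  \sum_(j < k) Ex p mu (fun Y w => position_value T v (tb Y) Y w j).
  rewrite /ALG_par_value /Ex exchange_big /=; apply: eq_bigr => Y _.
  rewrite mulr_sumr exchange_big /=; apply: eq_bigr => w _.
  rewrite /par_reward !mulr_sumr; apply: eq_bigr => j _; ring.
rewrite /lp_obj mulr_sumr; apply: ler_sum => j _.
have -> : \sum_(i < n) v i * p i * y i j = \sum_(i in [set: 'I_n]) a p y j i * v i.
  rewrite [RHS](eq_bigl (fun i => true)) => [|i]; last by rewrite inE.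
  apply: eq_bigr => i _; rewrite /a; ring.
apply: (key hp hmu h01 (h1 j) (erefl _)).
- by move=> i _; apply: hv.
- move=> Y w mP.
  have hd : (degP Y j <= T)%N.
    case: hmu => _ _ _ /(_ Y mP) [_ /(_ j)] Hd _.
    exact: deg_le (hT j) Hd.
  by case: (posval_props hv w (htb Y) hd).
- move=> Y w i mP _ Hi.
  have hd : (degP Y j <= T)%N.
    case: hmu => _ _ _ /(_ Y mP) [_ /(_ j)] Hd _.
    exact: deg_le (hT j) Hd.
  by case: (posval_props hv w (htb Y) hd) => _; apply.
Qed.

Section Seq.
Variables (R : realType) (n k T : nat) (p v : 'I_n -> R).
Hypothesis hp : forall i, 0 <= p i <= 1.
Variable pol : seq_policy n.

Definition pairw (w : outcome n) (i : 'I_n) := (i, w i).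

Lemma run_inv (w : outcome n) f (h : history n) :
  h = map (pairw w) (map fst h) -> uniq (map fst h) -> (hires h <= k)%N ->
  let h' := seq_run k pol w f h in
  [/\ h' = map (pairw w) (map fst h'), uniq (map fst h'), (hires h' <= k)%N
    & (size h' <= size h + f)%N].
Proof.
elim: f h => [|f IH] h Eh Uh Hh /=; first by rewrite addn0.
case: (pol h) => [i|]; last by rewrite leq_addr.
case: ifP => [/andP[ni hl]|_]; last by split => //; rewrite leq_addr.
have := IH (rcons h (i, w i)).
rewrite !map_rcons -Eh rcons_uniq ni Uh /= => /(_ erefl isT).
case.
  by rewrite /hires -cats1 count_cat /= addn0; case: (w i); rewrite ?addn1 ?addn0 // ltnW.
move=> E1 E2 E3 E4; split => //.
by rewrite (leq_trans E4) // size_rcons addSnnS.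
Qed.

Lemma run_prefix (w : outcome n) f (h : history n) i :
  i \in map fst h -> i \in map fst (seq_run k pol w f h).
Proof.
elim: f h => [|f IH] h Hi //=.
case: (pol h) => [i'|] //; case: ifP => // _; apply: IH.
by rewrite map_rcons mem_rcons in_cons Hi orbT.
Qed.

Definition flip (i : 'I_n) (w : outcome n) : outcome n :=
  [ffun l => if l == i then ~~ w l else w l].

Lemma flip_inj i : injective (flip i).
Proof.
apply: (can_inj (g := flip i)) => w; apply/ffunP => l; rewrite !ffunE.
by case: (l == i) => //; rewrite negbK.
Qed.

Lemma run_flip (w : outcome n) i f (h : history n) :
  (i \in map fst (seq_run k pol w f h)) =
  (i \in map fst (seq_run k pol (flip i w) f h)).
Proof.
elim: f h => [|f IH] h //=.
case: (pol h) => [i'|] //; case: ifP => // _.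
have [->|ne] := eqVneq i' i.
  by rewrite !run_prefix // map_rcons mem_rcons in_cons eqxx.
have -> : flip i w i' = w i' by rewrite /flip ffunE (negbTE ne).
exact: IH.
Qed.

Definition off (w : outcome n) (i : 'I_n) : bool :=
  i \in map fst (seq_run k pol w (k * T) [::]).

Definition xx (i : 'I_n) : R := \sum_(w : outcome n) probw p w * (off w i)%:R.

Lemma indep i :
  \sum_(w : outcome n) probw p w * (off w i && w i)%:R = p i * xx i.
Proof.
pose rest (w : outcome n) := \prod_(l < n | l != i) (if w l then p l else 1 - p l).
pose g w := rest w * (off w i)%:R.
have Ep : forall w, probw p w = (if w i then p i else 1 - p i) * rest w.
  by move=> w; rewrite /probw (bigD1 i).
have Eg : forall w, g (flip i w) = g w.
  move=> w; rewrite /g /off -run_flip; congr (_ * _).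
  apply: eq_bigr => l ne; by rewrite /flip ffunE (negbTE ne).
have AB : \sum_(w : outcome n | ~~ w i) g w = \sum_(w : outcome n | w i) g w.
  rewrite (reindex_inj (@flip_inj i)) /=; apply: eq_big => w.
    by rewrite /flip ffunE eqxx negbK.
  by move=> _; rewrite Eg.
rewrite /xx (bigID (fun w : outcome n => w i)) [in RHS](bigID (fun w : outcome n => w i)) /=.
have -> : \sum_(w : outcome n | ~~ w i) probw p w * (off w i && w i)%:R = 0.
  by apply: big1 => w /negbTE ->; rewrite andbF mulr0.
have E1 : \sum_(w : outcome n | w i) probw p w * (off w i && w i)%:R =
          p i * \sum_(w : outcome n | w i) g w.
  rewrite mulr_sumr; apply: eq_bigr => w wi; rewrite Ep wi andbT /g; ring.
have E2 : \sum_(w : outcome n | w i) probw p w * (off w i)%:R =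
          p i * \sum_(w : outcome n | w i) g w.
  rewrite mulr_sumr; apply: eq_bigr => w wi; rewrite Ep wi /g; ring.
have E3 : \sum_(w : outcome n | ~~ w i) probw p w * (off w i)%:R =
          (1 - p i) * \sum_(w : outcome n | ~~ w i) g w.
  rewrite mulr_sumr; apply: eq_bigr => w /negbTE wi; rewrite Ep wi /g; ring.
rewrite E1 E2 E3 AB addr0; ring.
Qed.

Lemma sum_uniq_ind (s : seq 'I_n) (P : pred 'I_n) (F : 'I_n -> R) : uniq s ->
  \sum_(i <- s | P i) F i = \sum_i F i * ((i \in s) && P i)%:R.
Proof.
move=> us; rewrite big_mkcond big_uniq //= big_mkcond /=.
apply: eq_bigr => i _; case: (i \in s); case: (P i) => /=;
  by rewrite ?mulr1 ?mulr0.
Qed.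

Lemma count_ind (s : seq 'I_n) (P : pred 'I_n) : uniq s ->
  (count P s)%:R = \sum_i ((i \in s) && P i)%:R :> R.
Proof.
move=> us; rewrite -sum1_count natr_sum sum_uniq_ind //.
by apply: eq_bigr => i _; rewrite mul1r.
Qed.

Lemma run_facts (w : outcome n) :
  let h := seq_run k pol w (k * T) [::] in
  [/\ h = map (pairw w) (map fst h), uniq (map fst h), (hires h <= k)%N
    & (size h <= k * T)%N].
Proof. by have := @run_inv w (k * T) [::] erefl isT isT. Qed.

Lemma seq_val : seq_value k T p v pol = \sum_i v i * p i * xx i.
Proof.
rewrite /seq_value.
have -> : \sum_(w : outcome n) probw p w * hist_value v (seq_run k pol w (k * T) [::])
  = \sum_(w : outcome n) \sum_i v i * (probw p w * (off w i && w i)%:R).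
  apply: eq_bigr => w _; case: (run_facts w) => E U _ _.
  rewrite /hist_value E big_map /= sum_uniq_ind // mulr_sumr.
  by apply: eq_bigr => i _; rewrite /off; ring.
rewrite exchange_big /=; apply: eq_bigr => i _.
by rewrite -mulr_sumr indep mulrA.
Qed.

Lemma hires_bound : \sum_i p i * xx i <= k%:R.
Proof.
under eq_bigr => i _ do rewrite -indep.
rewrite exchange_big /=.
apply: (@le_trans _ _ (\sum_(w : outcome n) probw p w * k%:R)); last first.
  by rewrite -mulr_suml sum_probw mul1r.
apply: ler_sum => w _.
rewrite -mulr_sumr; apply: ler_wpM2l; first exact: probw_ge0.
case: (run_facts w) => E U Hh _.
have -> : \sum_i (off w i && w i)%:R = (count w (map fst (seq_run k pol w (k * T) [::])))%:R :> R.
  by rewrite (count_ind w U).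
move: Hh; rewrite /hires {1}E count_map.
by rewrite ler_nat.
Qed.

Lemma size_bound : \sum_i xx i <= (k * T)%:R.
Proof.
rewrite /xx exchange_big /=.
apply: (@le_trans _ _ (\sum_(w : outcome n) probw p w * (k * T)%:R)); last first.
  by rewrite -mulr_suml sum_probw mul1r.
apply: ler_sum => w _.
rewrite -mulr_sumr; apply: ler_wpM2l; first exact: probw_ge0.
case: (run_facts w) => E U _ Hs.
have -> : \sum_i (off w i)%:R = (count predT (map fst (seq_run k pol w (k * T) [::])))%:R :> R.
  by rewrite (count_ind predT U); apply: eq_bigr => i _; rewrite andbT.
by rewrite count_predT size_map ler_nat.
Qed.

Lemma xx01 i : 0 <= xx i <= 1.
Proof.
apply/andP; split.
  apply: sumr_ge0 => w _; apply: mulr_ge0; [exact: probw_ge0|exact: ler0n].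
rewrite -(sum_probw p); apply: ler_sum => w _.
rewrite -[leRHS]mulr1; apply: ler_wpM2l; first exact: probw_ge0.
by case: (off w i).
Qed.
End Seq.

Lemma part1 (R : realType) (n k T : nat) (p v : 'I_n -> R)
  (hp : forall i, 0 <= p i <= 1) (y : 'I_n -> 'I_k -> R)
  (hy : lp_optimal T p v y) (pol : seq_policy n) :
  seq_value k T p v pol <= lp_obj p v y.
Proof.
case: hy => _ opt.
have [k0|kpos] := posnP k.
  subst k; rewrite /seq_value mul0n /= /lp_obj big_ord0.
  by rewrite big1 // => w _; rewrite /hist_value big_nil mulr0.
have kR : 0 < k%:R :> R by rewrite ltr0n.
have kne : k%:R != 0 :> R by rewrite gt_eqF.
have Ez : forall z : R, z *+ k = z * k%:R := fun z => esym (mulr_natr z k).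
pose y' (i : 'I_n) (j : 'I_k) := xx k T p pol i / k%:R.
have Eobj : lp_obj p v y' = seq_value k T p v pol.
  rewrite seq_val // /lp_obj /y' sumr_const card_ord.
  rewrite -sumrMnl; apply: eq_bigr => i _.
  by rewrite Ez -!mulrA mulVf ?mulr1.
rewrite -Eobj; apply: opt; split.
- move=> i j; have /andP[x0 x1] := xx01 k T hp pol i; rewrite /y'.
  apply/andP; split; first by rewrite divr_ge0 // ler0n.
  rewrite ler_pdivrMr // mul1r; apply: le_trans x1 _.
  by rewrite ler1n.
- move=> j; rewrite /y' -mulr_suml ler_pdivrMr // -natrM mulnC.
  exact: size_bound.
- move=> j; rewrite /y'.
  under eq_bigr => i _ do rewrite mulrA.
  rewrite -mulr_suml ler_pdivrMr // mul1r; exact: hires_bound.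
- move=> i; rewrite /y' sumr_const card_ord Ez divfK //.
  by case/andP: (xx01 k T hp pol i).
Qed.

Unset Implicit Arguments.

Theorem corollary5p1 (R : realType) (n k T : nat) (p v : 'I_n -> R)
  (hp : forall i, 0 <= p i <= 1) (hv : forall i, 0 <= v i)
  (y : 'I_n -> 'I_k -> R) (hy : lp_optimal T p v y)
  (mu : rounding n k -> R) (hmu : is_GKPS_rounding y mu)
  (tb : rounding n k -> {perm 'I_n})
  (htb : forall Y, decreasing_value_order v (tb Y)) :
  forall pol : seq_policy n,
    (1 - expR (-1)) * seq_value k T p v pol <= ALG_par_value T p v mu tb.
Proof.
move=> pol.
have c0 : 0 <= 1 - expR (-1) :> R by rewrite subr_ge0 expR_le1 lerN10.
apply: le_trans (part2 hp hv _ hmu htb); last by case: hy.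
by apply: ler_wpM2l => //; apply: part1.
Qed.
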